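(* Let $\Lambda=(0,+\infty)$ and let $K\subset\mathbb{R}^\Lambda$ be a $k$-dimensional convex cone of functions from $\Lambda$ to $\mathbb{R}$ which is closed under pointwise multiplication, i.e. $fg\in K$ for all $f,g\in K$. Then there exist unique nonempty pairwise disjoint sets $A_1,\dots,A_k\subset\Lambda$ such that every $f\in K$ can be represented as \[ f(\lambda)=\sum_{i=1}^k v_i\,\mathbb{1}_{A_i}(\lambda),\qquad v_i\in\mathbb{R}. \]
   Context: $\mathbb{1}_{A}$ denotes the indicator function of a set $A$. A $k$-dimensional convex cone means a convex cone whose linear span has dimension $k$. *)

(* Defs.v *)
From HB Require Import structures.
From mathcomp Require Import all_boot all_order all_algebra all_fingroup.
From mathcomp Require Import all_classical all_reals.
From mathcomp Require Import numfun.
Set Implicit Arguments. Unset Strict Implicit. Unset Printing Implicit Defensive.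
Import Order.TTheory GRing.Theory Num.Theory.
Local Open Scope ring_scope.
Local Open Scope classical_set_scope.

Definition Lam (R : realType) := {x : R | 0 < x}.

Definition lincomb (R : realType) (T : Type) (n : nat)
  (c : 'I_n -> R) (g : 'I_n -> T -> R) : T -> R :=
  fun x => \sum_(i < n) c i * g i x.

Definition in_span (R : realType) (T : Type) (K : set (T -> R)) (f : T -> R) :=
  exists n (c : 'I_n -> R) (g : 'I_n -> T -> R),
    (forall i, K (g i)) /\ f = lincomb c g.

Definition lin_indep (R : realType) (T : Type) (k : nat) (b : 'I_k -> T -> R) :=
  forall c : 'I_k -> R, lincomb c b = (fun _ => 0) -> forall i, c i = 0.

Definition span_dim (R : realType) (T : Type) (K : set (T -> R)) (k : nat) :=
  exists b : 'I_k -> T -> R,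
    lin_indep b /\ (forall i, in_span K (b i)) /\
    (forall f, in_span K f -> exists c : 'I_k -> R, f = lincomb c b).

Definition convex_cone (R : realType) (T : Type) (K : set (T -> R)) :=
  K !=set0 /\
  (forall f g, K f -> K g -> K (fun x => f x + g x)) /\
  (forall (t : R) f, 0 <= t -> K f -> K (fun x => t * f x)).

Definition mul_closed (R : realType) (T : Type) (K : set (T -> R)) :=
  forall f g, K f -> K g -> K (fun x => f x * g x).

Definition good_partition (R : realType) (T : Type) (K : set (T -> R)) (k : nat)
  (A : 'I_k -> set T) :=
  (forall i, A i !=set0) /\
  (forall i j, i != j -> A i `&` A j = set0) /\
  (forall f, K f -> exists v : 'I_k -> R,
       forall x, f x = \sum_(i < k) v i * (\1_(A i) x : R)).

(* Main.v *)
Require Import Defs.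
From HB Require Import structures.
From mathcomp Require Import all_boot all_order all_algebra all_fingroup.
From mathcomp Require Import all_classical all_reals.
From mathcomp Require Import numfun.
Import Order.TTheory GRing.Theory Num.Theory.
Local Open Scope ring_scope.
Local Open Scope classical_set_scope.

Section Pts.
Variables (R : realType) (T : Type) (k : nat) (b : 'I_k -> T -> R).

Definition evm {n} (X : 'I_n -> T) : 'M[R]_(n, k) := \matrix_(i, j) b j (X i).
Definition ev (x : T) : 'rV[R]_k := \row_j b j x.

Lemma pts : lin_indep b -> exists X : 'I_k -> T, evm X \in unitmx.
Proof.
move=> bi.
pose P r := `[< exists n (X : 'I_n -> T), (r <= \rank (evm X))%N >].
have P0 : exists r, P r.
  exists 0%N; apply/asboolP; exists 0%N.
  by exists (fun i : 'I_0 => False_rect T ((fun e : false = true => match e in _ = t return (if t then False else True) with erefl => I end) (ltn_ord i))).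
have Pb r : P r -> (r <= k)%N.
  by move/asboolP => [n [X /leq_trans]]; apply; exact: rank_leq_col.
case: (ex_maxnP P0 Pb) => r /asboolP [n [X hr]] hmax.
have full : row_full (evm X).
  apply/negPn/negP => nf.
  have [x hx] : exists x, ~~ (ev x <= evm X)%MS.
    case: (pselect (exists x, ~~ (ev x <= evm X)%MS)) => // H; exfalso.
    have Hx x : (ev x *m cokermx (evm X)) = 0.
      apply/eqP; rewrite -submxE; apply/negPn/negP => hx; apply: H; by exists x.
    have C0 : cokermx (evm X) = 0.
      apply/matrixP => i j; rewrite [RHS]mxE.
      apply: (bi (fun l => cokermx (evm X) l j)).
      apply: funext => x; rewrite /lincomb.
      transitivity ((ev x *m cokermx (evm X)) 0 j); last by rewrite Hx mxE.
      by rewrite !mxE; apply: eq_bigr => l _; rewrite !mxE mulrC.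
    move: nf; rewrite /row_full.
    have := mxrank_coker (evm X); rewrite C0 mxrank0 => /esym/eqP.
    by rewrite subn_eq0 => h; rewrite eqn_leq rank_leq_col h.
  pose X' := fun i : 'I_n.+1 => if unlift ord_max i is Some j then X j else x.
  have sub1 : (evm X <= evm X')%MS.
    apply/row_subP => i.
    have -> : row i (evm X) = row (lift ord_max i) (evm X').
      by apply/rowP => j; rewrite !mxE /X' liftK.
    exact: row_sub.
  have nsub : ~~ (evm X' <= evm X)%MS.
    apply: contra hx => h.
    have -> : ev x = row ord_max (evm X').
      by apply/rowP => j; rewrite !mxE /X' unlift_none.
    exact: submx_trans (row_sub _ _) h.
  have lt : (evm X < evm X')%MS by rewrite ltmxE sub1 nsub.
  have := rank_ltmx lt.
  have : P (\rank (evm X')) by apply/asboolP; exists n.+1, X'.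
  move/hmax => h1 h2.
  by rewrite ltnNge (leq_trans h1 hr) in h2.
exists (X \o fullrankfun full).
have -> : evm (X \o fullrankfun full) = rowsub (fullrankfun full) (evm X).
  by apply/matrixP => i j; rewrite !mxE.
exact: fullrowsub_unit.
Qed.
End Pts.

Set Implicit Arguments.
Section Main.
Variables (R : realType) (T : Type) (K : set (T -> R)) (k : nat).
Variables (b : 'I_k -> T -> R).
Hypotheses (bi : lin_indep b) (bspan : forall i, in_span K (b i))
  (brep : forall f, in_span K f -> exists c : 'I_k -> R, f = lincomb c b)
  (mulK : mul_closed K).

Definition W (f : T -> R) := exists c : 'I_k -> R, f = lincomb c b.

Lemma W_lin n (c : 'I_n -> R) (g : 'I_n -> T -> R) : (forall i, W (g i)) -> W (lincomb c g).
Proof.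
move=> hg; have [d hd] := choice hg.
exists (fun j => \sum_i c i * d i j); apply: funext => x; rewrite /lincomb.
under eq_bigr => i _ do rewrite hd /lincomb mulr_sumr.
rewrite exchange_big /=; apply: eq_bigr => j _.
by rewrite mulr_suml; apply: eq_bigr => i _; rewrite mulrA.
Qed.

Lemma K_span f : K f -> in_span K f.
Proof.
move=> Kf; exists 1%N, (fun _ => 1), (fun _ => f); split => //.
by apply: funext => x; rewrite /lincomb big_ord1 mul1r.
Qed.

Lemma mul_lincomb_l n (c : 'I_n -> R) (g : 'I_n -> T -> R) (h : T -> R) :
  (fun x => lincomb c g x * h x) = lincomb c (fun i x => g i x * h x).
Proof.
by apply: funext => x; rewrite /lincomb mulr_suml; apply: eq_bigr => i _; rewrite mulrA.
Qed.

Lemma mul_lincomb_r n (c : 'I_n -> R) (g : 'I_n -> T -> R) (h : T -> R) :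
  (fun x => h x * lincomb c g x) = lincomb c (fun i x => h x * g i x).
Proof.
by apply: funext => x; rewrite /lincomb mulr_sumr; apply: eq_bigr => i _; rewrite mulrCA.
Qed.

Lemma W_mul_span f h : in_span K f -> in_span K h -> W (fun x => f x * h x).
Proof.
move=> [n [c [g [Kg ->]]]] [m [d [g' [Kg' ->]]]].
rewrite mul_lincomb_l; apply: W_lin => i.
rewrite mul_lincomb_r; apply: W_lin => j.
by apply: brep; apply: K_span; apply: mulK.
Qed.

Lemma W_mul f h : W f -> W h -> W (fun x => f x * h x).
Proof.
move=> [c ->] [d ->].
rewrite mul_lincomb_l; apply: W_lin => i.
rewrite mul_lincomb_r; apply: W_lin => j.
exact: W_mul_span.
Qed.

Lemma W_sub f h : W f -> W h -> W (fun x => f x - h x).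
Proof.
move=> [c ->] [d ->]; exists (fun i => c i - d i).
apply: funext => x; rewrite /lincomb -sumrB; apply: eq_bigr => i _; by rewrite mulrBl.
Qed.

Lemma W_span f : in_span K f -> W f. Proof. exact: brep. Qed.

Variable X : 'I_k -> T.
Hypothesis Xu : (@evm R T k b k X) \in unitmx.

Lemma W_inj f : W f -> (forall l, f (X l) = 0) -> forall y, f y = 0.
Proof.
move=> [c ->] h0.
pose cv := \col_j c j.
have N0 : (@evm R T k b k X) *m cv = 0.
  apply/matrixP => l j; rewrite !mxE -[RHS](h0 l) /lincomb.
  by apply: eq_bigr => i _; rewrite !mxE mulrC.
have cv0 : cv = 0 by rewrite -(mulKmx Xu cv) N0 mulmx0.
move=> y; rewrite /lincomb big1 // => i _.
have := congr1 (fun M : 'M[R]_(k,1) => M i 0) cv0; rewrite !mxE => ->.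
by rewrite mul0r.
Qed.

Definition e (i : 'I_k) : T -> R := lincomb (fun j => invmx ((@evm R T k b k X)) j i) b.

Lemma eW i : W (e i). Proof. by exists (fun j => invmx ((@evm R T k b k X)) j i). Qed.

Lemma eX i l : e i (X l) = (l == i)%:R.
Proof.
have := congr1 (fun M : 'M[R]_k => M l i) (mulmxV Xu).
rewrite !mxE /= => <-; rewrite /e /lincomb.
by apply: eq_bigr => j _; rewrite !mxE mulrC.
Qed.

Lemma sum_delta (a : 'I_k -> R) m : \sum_l a l * (m == l)%:R = a m.
Proof.
rewrite (bigD1 m) //= eqxx mulr1 big1 ?addr0 // => l; rewrite eq_sym => /negbTE ->.
by rewrite mulr0.
Qed.

Lemma W_decomp f : W f -> forall y, f y = \sum_l f (X l) * e l y.
Proof.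
move=> Wf y; apply/eqP; rewrite -subr_eq0; apply/eqP.
apply: (@W_inj (fun y => f y - \sum_l f (X l) * e l y)).
  apply: W_sub => //.
  have -> : (fun y => \sum_l f (X l) * e l y) = lincomb (fun l => f (X l)) e by [].
  by apply: W_lin => i; exact: eW.
move=> m /=; by under eq_bigr => l _ do rewrite eX; rewrite sum_delta subrr.
Qed.

Lemma e_mul i j y : e i y * e j y = (i == j)%:R * e i y.
Proof.
apply/eqP; rewrite -subr_eq0; apply/eqP.
apply: (@W_inj (fun y => e i y * e j y - (i == j)%:R * e i y)).
  apply: W_sub; first exact: W_mul (eW i) (eW j).
  have -> : (fun y => (i == j)%:R * e i y) = lincomb (fun _ : 'I_1 => (i == j)%:R) (fun _ => e i).
    by apply: funext => x; rewrite /lincomb big_ord1.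
  by apply: W_lin => _; exact: eW.
move=> l /=; rewrite !eX.
have [->|nli] := eqVneq l i; last by rewrite mulr0 mul0r subrr.
by rewrite ?eqxx mulr1 mul1r subrr.
Qed.

Lemma e01 i y : e i y = 0 \/ e i y = 1.
Proof.
have h := e_mul i i y; rewrite eqxx mul1r in h.
have : e i y * (e i y - 1) == 0 by rewrite mulrBr mulr1 h subrr.
rewrite mulf_eq0 subr_eq0 => /orP[/eqP|/eqP]; by [left|right].
Qed.

Definition A i := [set y | e i y = 1].

Lemma indA i y : (\1_(A i) y : R) = e i y.
Proof.
rewrite indicE; have [h|h] := e01 i y.
  rewrite h; case: (boolP (y \in A i)) => //; rewrite inE /A /= h => /eqP.
  by rewrite eq_sym oner_eq0.
by rewrite h mem_set.
Qed.

Lemma A_good : good_partition K A.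
Proof.
split; [|split].
- by move=> i; exists (X i); rewrite /A /= eX eqxx.
- move=> i j nij; rewrite -subset0 => y [/= h1 h2].
  have := e_mul i j y; rewrite h1 h2 (negbTE nij) mulr1 mul0r => /eqP.
  by rewrite oner_eq0.
- move=> f Kf; exists (fun l => f (X l)) => y.
  rewrite (W_decomp (W_span (K_span Kf)) y).
  by apply: eq_bigr => l _; rewrite indA.
Qed.

Section Uniq.
Variable B : 'I_k -> set T.
Hypothesis gB : good_partition K B.

Definition RepB (f : T -> R) :=
  exists v : 'I_k -> R, forall y, f y = \sum_(i < k) v i * (\1_(B i) y : R).

Lemma RepB_lin n (c : 'I_n -> R) (g : 'I_n -> T -> R) :
  (forall i, RepB (g i)) -> RepB (lincomb c g).
Proof.
move=> hg; have [d hd] := choice hg.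
exists (fun j => \sum_i c i * d i j) => y; rewrite /lincomb.
under eq_bigr => i _ do rewrite hd mulr_sumr.
rewrite exchange_big /=; apply: eq_bigr => j _.
by rewrite mulr_suml; apply: eq_bigr => i _; rewrite mulrA.
Qed.

Lemma RepB_span f : in_span K f -> RepB f.
Proof.
move=> [n [c [g [Kg ->]]]]; apply: RepB_lin => i.
by have [_ [_ h]] := gB; apply: h.
Qed.

Lemma RepB_W f : W f -> RepB f.
Proof. by move=> [c ->]; apply: RepB_lin => i; apply: RepB_span. Qed.


Lemma RepB_val f i y : RepB f -> B i y ->
  exists v, (forall z, B i z -> f z = v).
Proof.
move=> [v hv] _; exists (v i) => z Bz; rewrite hv (bigD1 i) //=.
rewrite indicE mem_set // mulr1 big1 ?addr0 // => l nli.
have [_ [hd _]] := gB.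
rewrite indicE memNset ?mulr0 // => Blz.
have := hd l i nli; rewrite -subset0 => /(_ z); apply; by split.
Qed.

Lemma RepB_const f i y z : RepB f -> B i y -> B i z -> f y = f z.
Proof.
move=> Rf By Bz; have [v hv] := RepB_val Rf By.
by rewrite (hv _ By) (hv _ Bz).
Qed.

Lemma RepB_zero f y : RepB f -> (forall i, ~ B i y) -> f y = 0.
Proof.
move=> [v hv] hy; rewrite hv big1 // => i _.
by rewrite indicE memNset ?mulr0 //; apply: hy.
Qed.

Lemma eB l : RepB (e l). Proof. exact: RepB_W (eW l). Qed.

Lemma uniq_part : exists s : {perm 'I_k}, forall i, B i = A (s i).
Proof.
have hs : forall l, exists i, B i (X l).
  move=> l; case: (pselect (exists i, B i (X l))) => // H; exfalso.
  have := RepB_zero (eB l) (fun i hi => H (ex_intro _ i hi)).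
  by rewrite eX eqxx => /eqP; rewrite oner_eq0.
have [sg hsg] := choice hs.
have sginj : injective sg.
  move=> l m h.
  have Bm : B (sg l) (X m) by rewrite h; apply: hsg.
  have := RepB_const (eB l) (hsg l) Bm.
  rewrite !eX eqxx => /eqP; rewrite eq_sym pnatr_eq1 eqb1 => /eqP.
  by [].
pose s := ((perm sginj)^-1)%g.
have hsX i : B i (X (s i)).
  have := hsg (s i); suff -> : sg (s i) = i by [].
  by rewrite -[in RHS](permKV (perm sginj) i) permE.
exists s => i; apply/seteqP; split => y /=.
- move=> By; rewrite /A /=.
  by rewrite (RepB_const (eB (s i)) By (hsX i)) eX eqxx.
- rewrite /A /= => ey.
  case: (pselect (exists i', B i' y)) => [[i' Bi']|H]; last first.
    have := RepB_zero (eB (s i)) (fun i hi => H (ex_intro _ i hi)).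
    by rewrite ey => /eqP; rewrite oner_eq0.
  have := RepB_const (eB (s i)) Bi' (hsX i'); rewrite ey eX => /eqP.
  rewrite eq_sym pnatr_eq1 eqb1 => /eqP /perm_inj ii'.
  by rewrite -ii'.
Qed.
End Uniq.

End Main.
Unset Implicit Arguments.

Theorem proposition1 (R : realType) (k : nat) (K : set (Lam R -> R)) :
  convex_cone K -> span_dim K k -> mul_closed K ->
  exists A : 'I_k -> set (Lam R),
    good_partition K A /\
    (forall B : 'I_k -> set (Lam R), good_partition K B ->
       exists s : {perm 'I_k}, forall i, B i = A (s i)).
Proof.
move=> _ [b [bi [bspan brep]]] mulK.
have [X Xu] := @pts R (Lam R) k b bi.
exists (A R b X); split; first exact: A_good bspan brep mulK X Xu.
by move=> B gB; exact: uniq_part b bspan X Xu B gB.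
Qed.
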